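(* Let $A,B$ be points of the plane and $\vec\alpha,\vec\beta$ unit vectors with oriented angle $\Omega=(\widehat{\vec\alpha,\vec\beta})\in\,]0,\pi[$. Let $L>0$ and $X\in W^{2,\infty}(0,L;\mathbb{R}^2)$ with $\|X'(s)\|=1$ for all $s$, $X(0)=A$, $X(L)=B$, $X'(0)=\vec\alpha$, $X'(L)=\vec\beta$, and such that a continuous determination $\phi$ of the angle $\phi(s)=(\widehat{\vec\alpha,X'(s)})$ is nondecreasing on $[0,L]$. Then for every $s\in[0,L]$ the whole curve lies in the closed half-plane bounded by the tangent line at $X(s)$ on the side of $\vec N(s)=\sigma(X'(s))$, where $\sigma$ is the rotation by $+\pi/2$; i.e. $\langle X(t)-X(s),\sigma(X'(s))\rangle\ge0$ for all $s,t\in[0,L]$.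
   Context: $\langle\cdot,\cdot\rangle$ is the Euclidean inner product of $\mathbb{R}^2$. *)

(* Defs.v *)
From Stdlib Require Import Reals.
Open Scope R_scope.

Definition pt := (R * R)%type.

Definition vadd (u v : pt) : pt := (fst u + fst v, snd u + snd v).
Definition vsub (u v : pt) : pt := (fst u - fst v, snd u - snd v).
Definition vscale (c : R) (u : pt) : pt := (c * fst u, c * snd u).

Definition inner (u v : pt) : R := fst u * fst v + snd u * snd v.
Definition vnorm (u : pt) : R := sqrt (inner u u).

Definition rot (theta : R) (u : pt) : pt :=
  (cos theta * fst u - sin theta * snd u, sin theta * fst u + cos theta * snd u).
Definition rot90 (u : pt) : pt := (- snd u, fst u).

Definition has_deriv_on (a b : R) (f df : R -> pt) (s : R) : Prop :=
  forall eps, 0 < eps -> exists delta, 0 < delta /\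
    forall t, a <= t <= b -> t <> s -> Rabs (t - s) < delta ->
      vnorm (vsub (vscale (/ (t - s)) (vsub (f t) (f s))) (df s)) < eps.

(* X restricted to [a,b] is in W^{2,oo}(a,b;R^2) with derivative dX:
   X is differentiable on [a,b] with derivative dX, and dX is Lipschitz
   on [a,b] (i.e. X' in W^{1,oo}). *)
Definition W2inf_with_deriv (a b : R) (X dX : R -> pt) : Prop :=
  (forall s, a <= s <= b -> has_deriv_on a b X dX s) /\
  exists K, forall s t, a <= s <= b -> a <= t <= b ->
    vnorm (vsub (dX s) (dX t)) <= K * Rabs (s - t).

Definition continuous_on_interval (a b : R) (phi : R -> R) : Prop :=
  forall s, a <= s <= b -> forall eps, 0 < eps -> exists delta, 0 < delta /\
    forall t, a <= t <= b -> Rabs (t - s) < delta -> Rabs (phi t - phi s) < eps.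

(* Main.v *)
Require Import Defs.
From Stdlib Require Import Reals Lra Psatz.
Open Scope R_scope.

Lemma CS (v N : pt) : Rabs (inner v N) <= vnorm v * vnorm N.
Proof.
  unfold vnorm. rewrite <- sqrt_mult_alt.
  2:{ unfold inner; nra. }
  rewrite <- sqrt_Rsqr_abs. apply sqrt_le_1_alt.
  destruct v as [a1 a2]; destruct N as [b1 b2]; unfold inner, Rsqr; simpl.
  assert (H := pow2_ge_0 (a1*b2-a2*b1)). nra.
Qed.

Lemma norm1 (v : pt) : vnorm v = 1 -> fst v * fst v + snd v * snd v = 1.
Proof.
  unfold vnorm, inner. intro H.
  rewrite <- (Rsqr_sqrt (fst v * fst v + snd v * snd v)) by nra.
  rewrite H. unfold Rsqr; ring.
Qed.

Lemma mono (g g' : R -> R) (L a b : R) :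
  0 <= a -> a < b -> b <= L ->
  (forall u, 0 < u < L -> derivable_pt_lim g u (g' u)) ->
  (forall u, a <= u <= b -> 0 < u < L -> 0 <= g' u) ->
  (forall u, 0 <= u <= L -> forall eps, 0 < eps -> exists delta, 0 < delta /\
     forall t, 0 <= t <= L -> Rabs (t - u) < delta -> Rabs (g t - g u) < eps) ->
  g a <= g b.
Proof.
  intros Ha Hab Hb Hd Hp Hc.
  destruct (Rle_or_lt (g a) (g b)) as [H|H]; [exact H|].
  exfalso.
  set (eps := (g a - g b) / 2).
  assert (Heps : 0 < eps) by (unfold eps; lra).
  destruct (Hc a ltac:(lra) eps Heps) as [d1 [Hd1 H1]].
  destruct (Hc b ltac:(lra) eps Heps) as [d2 [Hd2 H2]].
  set (e := Rmin d1 (Rmin d2 ((b - a) / 2)) / 2).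
  assert (He : 0 < e).
  { unfold e. assert (0 < Rmin d1 (Rmin d2 ((b - a) / 2))); [|lra]. apply Rmin_Rgt_r. split; [lra|]. apply Rmin_Rgt_r. lra. }
  assert (He1 : e < d1) by (unfold e; generalize (Rmin_l d1 (Rmin d2 ((b - a) / 2))); lra).
  assert (He2 : e < d2) by (unfold e; generalize (Rmin_r d1 (Rmin d2 ((b - a) / 2)));
     generalize (Rmin_l d2 ((b - a) / 2)); lra).
  assert (He3 : e < (b - a) / 2) by (unfold e; generalize (Rmin_r d1 (Rmin d2 ((b - a) / 2)));
     generalize (Rmin_r d2 ((b - a) / 2)); lra).
  destruct (MVT_cor2 g g' (a + e) (b - e) ltac:(lra)) as [c [Hc1 Hc2]].
  { intros c Hc'. apply Hd. lra. }
  assert (0 <= g' c) by (apply Hp; lra).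
  assert (Hm : 0 <= g (b - e) - g (a + e)) by (rewrite Hc1; nra).
  specialize (H1 (a + e) ltac:(lra) ltac:(rewrite Rabs_right; lra)).
  specialize (H2 (b - e) ltac:(lra) ltac:(rewrite Rabs_left; lra)).
  apply Rabs_def2 in H1. apply Rabs_def2 in H2. unfold eps in *. lra.
Qed.

Lemma rot_sin (alpha : pt) p q :
  fst alpha * fst alpha + snd alpha * snd alpha = 1 ->
  inner (rot p alpha) (rot90 (rot q alpha)) = sin (p - q).
Proof.
  destruct alpha as [a1 a2]; simpl; intro H.
  rewrite sin_minus. unfold inner, rot90, rot; simpl.
  transitivity ((a1 * a1 + a2 * a2) * (sin p * cos q - cos p * sin q)); [ring|].
  rewrite H; ring.
Qed.

Theorem lemmaA1 (A B alpha beta : pt) (Omega L : R) (X dX : R -> pt) :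
  vnorm alpha = 1 -> vnorm beta = 1 ->
  0 < Omega < PI -> beta = rot Omega alpha ->
  0 < L ->
  W2inf_with_deriv 0 L X dX ->
  (forall s, 0 <= s <= L -> vnorm (dX s) = 1) ->
  X 0 = A -> X L = B -> dX 0 = alpha -> dX L = beta ->
  (exists phi : R -> R,
      continuous_on_interval 0 L phi /\
      phi 0 = 0 /\ phi L = Omega /\
      (forall s, 0 <= s <= L -> dX s = rot (phi s) alpha) /\
      (forall s t, 0 <= s <= t -> t <= L -> phi s <= phi t)) ->
  forall s t, 0 <= s <= L -> 0 <= t <= L ->
    inner (vsub (X t) (X s)) (rot90 (dX s)) >= 0.
Proof.
  intros Ha Hb HO Hbeta HL HW Hn HA HB Hda Hdb [phi [Hc [H0 [HpL [Hrot Hmono]]]]] s t Hs Ht.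
  destruct HW as [Hder _].
  set (N := rot90 (dX s)).
  assert (HN : vnorm N = 1).
  { unfold N. rewrite <- (Hn s Hs). unfold vnorm, inner, rot90; simpl. f_equal; ring. }
  set (g := fun u => inner (vsub (X u) (X s)) N).
  assert (gd : forall u, 0 < u < L -> derivable_pt_lim g u (inner (dX u) N)).
  { intros u Hu eps Heps.
    destruct (Hder u ltac:(lra) eps Heps) as [d0 [Hd0 Hd]].
    assert (Hdp : 0 < Rmin d0 (Rmin u (L - u))).
    { apply Rmin_Rgt_r. split; [lra|]. apply Rmin_Rgt_r. lra. }
    exists (mkposreal _ Hdp). intros h Hh0 Hh. simpl in Hh.
    generalize (Rmin_l d0 (Rmin u (L - u))) (Rmin_r d0 (Rmin u (L - u)))
      (Rmin_l u (L - u)) (Rmin_r u (L - u)); intros m1 m2 m3 m4.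
    apply Rabs_def2 in Hh as Hh'.
    specialize (Hd (u + h) ltac:(lra) ltac:(lra) ltac:(replace (u + h - u) with h by ring; lra)).
    replace (u + h - u) with h in Hd by ring.
    eapply Rle_lt_trans; [|exact Hd].
    eapply Rle_trans; [|apply Req_le; apply Rmult_1_r].
    rewrite <- HN. eapply Rle_trans; [|apply CS]. apply Req_le. f_equal.
    unfold g, inner, vsub, vscale; simpl.
    destruct (X (u + h)), (X u), (X s), (dX u), N; simpl. field. exact Hh0. }
  assert (gc : forall u, 0 <= u <= L -> forall eps, 0 < eps -> exists delta, 0 < delta /\
     forall t, 0 <= t <= L -> Rabs (t - u) < delta -> Rabs (g t - g u) < eps).
  { intros u Hu eps Heps.
    destruct (Hder u Hu 1 ltac:(lra)) as [d0 [Hd0 Hd]].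
    exists (Rmin d0 (eps / 2)). split.
    { apply Rmin_Rgt_r. lra. }
    intros t' Ht' Htu.
    generalize (Rmin_l d0 (eps / 2)) (Rmin_r d0 (eps / 2)); intros m1 m2.
    destruct (Req_dec t' u) as [->|Hne].
    { replace (g u - g u) with 0 by ring. rewrite Rabs_R0. lra. }
    specialize (Hd t' Ht' Hne ltac:(lra)).
    set (w := vsub (vscale (/ (t' - u)) (vsub (X t') (X u))) (dX u)) in Hd.
    assert (E : g t' - g u = (t' - u) * (inner w N + inner (dX u) N)).
    { unfold w, g, inner, vsub, vscale; simpl.
      destruct (X t'), (X u), (X s), (dX u), N; simpl. field. lra. }
    rewrite E, Rabs_mult.
    assert (C1 := CS w N). assert (C2 := CS (dX u) N).
    rewrite HN, Rmult_1_r in C1, C2. rewrite (Hn u Hu) in C2.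
    assert (Rabs (inner w N + inner (dX u) N) <= 2).
    { eapply Rle_trans; [apply Rabs_triang|]. lra. }
    assert (0 <= Rabs (t' - u)) by apply Rabs_pos.
    nra. }
  assert (gs : g s = 0).
  { unfold g, inner, vsub; simpl. ring. }
  assert (Ha1 := norm1 alpha Ha).
  assert (sgn : forall u, 0 <= u <= L -> inner (dX u) N = sin (phi u - phi s)).
  { intros u Hu. unfold N. rewrite (Hrot u Hu), (Hrot s Hs). apply rot_sin. exact Ha1. }
  assert (rng : forall u, 0 <= u <= L -> 0 <= phi u <= Omega).
  { intros u Hu. rewrite <- H0, <- HpL. split; apply Hmono; lra. }
  change (g t >= 0).
  destruct (Rtotal_order s t) as [Hst|[<-|Hst]].
  - rewrite <- gs. apply Rle_ge. apply (mono g (fun u => inner (dX u) N) L); try lra.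
    + exact gd.
    + intros u Hu Hu'. rewrite sgn by lra.
      assert (phi s <= phi u) by (apply Hmono; lra).
      assert (Hs' := rng s Hs). assert (Hu2 := rng u ltac:(lra)).
      apply sin_ge_0; lra.
    + exact gc.
  - rewrite gs; lra.
  - rewrite <- gs.
    assert (-(g t) <= -(g s)); [|lra].
    apply (mono (fun u => - g u) (fun u => - inner (dX u) N) L); try lra.
    + intros u Hu. apply (derivable_pt_lim_opp g u _ (gd u Hu)).
    + intros u Hu Hu'. rewrite sgn by lra.
      assert (phi u <= phi s) by (apply Hmono; lra).
      assert (Hs' := rng s Hs). assert (Hu2 := rng u ltac:(lra)).
      replace (phi u - phi s) with (- (phi s - phi u)) by ring.
      rewrite sin_neg, Ropp_involutive. apply sin_ge_0; lra.
    + intros u Hu eps Heps. destruct (gc u Hu eps Heps) as [d [Hd Hd']].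
      exists d. split; [exact Hd|]. intros t' Ht' Htu.
      replace (- g t' - - g u) with (- (g t' - g u)) by ring.
      rewrite Rabs_Ropp. auto.
Qed.
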